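(* Let $y$ be such that $\dot y$ is positive, $\mathcal N$-predictable, and $y(\eta,\cdot)=\int_0^\cdot\dot y(\eta,s)ds$ is a finite increasing homeomorphism of $[0,\infty)$ for the configurations considered. There exists a weak solution to the g-Hawkes problem $\text{g-H}_y$ if and only if there exists a solution to the g-Hawkes martingale problem $\text{g-H}^m_y$.
   Context: $\mathfrak N$ is the set of locally finite simple configurations on $(0,\infty)$ (point processes), identified with counting paths; $\mathcal N_t=\sigma(\omega([0,s]),s\le t)$. $y^*(\eta,t)=\inf\{s:y(\eta,s)>t\}$. A filtered probability space is $(\Omega,\mathcal F,\mathbf P)$ with a right-continuous filtration $\mathcal F$. A solution of $\text{g-H}_y$ on $(\Omega,\mathcal F,\mathbf P)$ is a pair $(Z,N)$ such that: (1) $Z$ and $N$ are a.s. point processes; (2) for every $t\ge0$, $y(Z,t)$ is an $\mathcal F$-stopping time; (3) $N(t)-t$ is an $\mathcal F$-local martingale; (4) $\mathbf P$-a.s., $Z(t)=N(y(Z,t))$ for all $t\ge0$. A solution is weak if the filtered probability space has to be specified (i.e. a solution exists on some filtered probability space). $(Z,\mathcal F)$ on $(\Omega,\mathcal F,\mathbf P)$ solves the martingale problem $\text{g-H}^m_y$ if $Z$ is a point process, $(y^*(Z,t))_t$ is $\mathcal F$-adapted, and $t\mapsto Z(y^*(Z,t))-t$ is an $\mathcal F$-local martingale. *)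

(* Defs.v *)
From HB Require Import structures.
From mathcomp Require Import all_boot all_order all_algebra.
From mathcomp Require Import all_classical all_reals all_analysis.

Set Implicit Arguments.
Unset Strict Implicit.
Unset Printing Implicit Defensive.

Import Order.TTheory GRing.Theory Num.Theory.
Import numFieldNormedType.Exports.
Local Open Scope classical_set_scope.
Local Open Scope ring_scope.

Section Defs.
Variable R : realType.

(* A locally finite simple configuration on (0,oo) is identified with its
   counting path  w t = w([0,t])  (t >= 0): w 0 = 0, nondecreasing,
   right-continuous, with jumps of size at most 1.  Local finiteness is
   automatic since w takes values in nat.  Values at t < 0 are irrelevant. *)
Definition is_counting_path (w : R -> nat) : Prop :=
  [/\ w 0 = 0%N,
      (forall s t, 0 <= s -> s <= t -> (w s <= w t)%N),
      (forall t, 0 <= t -> exists2 e : R, 0 < e &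
          forall s, t <= s -> s < t + e -> w s = w t) &
      (forall t, 0 < t -> exists2 e : R, 0 < e &
          forall s, t - e < s -> s < t -> (w t <= (w s).+1)%N)].

Definition canonical_filtration (t : R) : set (set (R -> nat)) :=
  <<s [set A | exists s k, [/\ 0 <= s, s <= t &
         A = [set w : R -> nat | w s = k]]] >>.

Definition config_time_domain : set ((R -> nat) * R) :=
  [set p | is_counting_path p.1 /\ 0 < p.2].

Definition predictable_sigma : set (set ((R -> nat) * R)) :=
  <<s config_time_domain,
      [set C | exists s t A, [/\ 0 <= s, s <= t, canonical_filtration s A &
          C = config_time_domain `&`
              [set p | A p.1 /\ s < p.2 /\ p.2 <= t]]] >>.

Definition is_predictable (f : (R -> nat) -> R -> R) : Prop :=
  forall B : set R, measurable B ->
    predictable_sigma (config_time_domain `&` [set p | B (f p.1 p.2)]).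

Definition incr_homeo_halfline (f : R -> R) : Prop :=
  [/\ (forall s t, 0 <= s -> s < t -> f s < f t),
      {within [set x | 0 <= x], continuous f} &
      f @` [set x | 0 <= x] = [set x | 0 <= x] ].

Definition admissible_clock (y ydot : (R -> nat) -> R -> R) : Prop :=
  is_predictable ydot /\
  forall eta, is_counting_path eta ->
    [/\ (forall s, 0 < s -> 0 < ydot eta s),
        (forall t, 0 <= t ->
           (y eta t)%:E = (\int[lebesgue_measure]_(s in `[0%R, t]%classic) (ydot eta s)%:E)%E) &
        incr_homeo_halfline (y eta)].

Definition y_star (y : (R -> nat) -> R -> R) (eta : R -> nat) (t : R) : R :=
  inf [set s | 0 <= s /\ t < y eta s].

Section Stoch.
Context {d : measure_display} {Omega : measurableType d}.
Variable P : probability Omega R.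

Definition is_filtration (F : R -> set (set Omega)) : Prop :=
  [/\ (forall t, 0 <= t -> sigma_algebra setT (F t)),
      (forall t, 0 <= t -> F t `<=` measurable),
      (forall s t, 0 <= s -> s <= t -> F s `<=` F t) &
      (forall t A, 0 <= t -> (forall s, t < s -> F s A) -> F t A)].

Definition is_point_process (Z : Omega -> R -> nat) : Prop :=
  (forall t (k : nat), measurable [set w | Z w t = k]) /\
  {ae P, forall w, is_counting_path (Z w)}.

Definition stopping_time (F : R -> set (set Omega)) (T : Omega -> \bar R) :=
  forall u, 0 <= u -> F u [set w | (T w <= u%:E)%E].

Definition adapted (F : R -> set (set Omega)) (M : R -> Omega -> R) :=
  forall t, 0 <= t -> forall B : set R, measurable B -> F t (M t @^-1` B).

(* martingale, defined without conditional expectations: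
   E[M_t 1_A] = E[M_s 1_A] for A in F_s, s <= t *)
Definition martingale (F : R -> set (set Omega)) (M : R -> Omega -> R) :=
  [/\ adapted F M,
      (forall t, 0 <= t -> P.-integrable setT (fun w => (M t w)%:E)) &
      (forall s t A, 0 <= s -> s <= t -> F s A ->
         (\int[P]_(w in A) (M t w)%:E = \int[P]_(w in A) (M s w)%:E)%E)].

Definition tmin (t : R) (x : \bar R) : R := fine (Order.min t%:E x).

Definition stopped (M : R -> Omega -> R) (tau : Omega -> \bar R) :
    R -> Omega -> R := fun t w => M (tmin t (tau w)) w.

Definition local_martingale (F : R -> set (set Omega)) (M : R -> Omega -> R) :=
  exists tau : nat -> Omega -> \bar R,
    [/\ (forall n, stopping_time F (tau n)),
        (forall n w, (0 <= tau n w)%E),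
        (forall n w, (tau n w <= tau n.+1 w)%E),
        {ae P, forall w, (tau n w)%E @[n --> \oo] --> +oo%E} &
        (forall n, martingale F (stopped M (tau n)))].

Definition gH_solution (y : (R -> nat) -> R -> R) (F : R -> set (set Omega))
    (Z N : Omega -> R -> nat) : Prop :=
  [/\ is_point_process Z, is_point_process N,
      (forall t, 0 <= t -> stopping_time F (fun w => (y (Z w) t)%:E)),
      local_martingale F (fun t w => (N w t)%:R - t) &
      {ae P, forall w, forall t, 0 <= t -> Z w t = N w (y (Z w) t)}].

Definition gHm_solution (y : (R -> nat) -> R -> R) (F : R -> set (set Omega))
    (Z : Omega -> R -> nat) : Prop :=
  [/\ is_point_process Z,
      adapted F (fun t w => y_star y (Z w) t) &
      local_martingale F (fun t w => (Z w (y_star y (Z w) t))%:R - t)].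

End Stoch.
End Defs.

Definition exists_weak_gH_solution (R : realType) (y : (R -> nat) -> R -> R)
  : Prop :=
  exists (d : measure_display) (Omega : measurableType d)
         (P : probability Omega R) (F : R -> set (set Omega))
         (Z N : Omega -> R -> nat),
    is_filtration F /\ gH_solution P y F Z N.

Definition exists_gHm_solution (R : realType) (y : (R -> nat) -> R -> R)
  : Prop :=
  exists (d : measure_display) (Omega : measurableType d)
         (P : probability Omega R) (F : R -> set (set Omega))
         (Z : Omega -> R -> nat),
    is_filtration F /\ gHm_solution P y F Z.

(* Main.v *)
Require Import Defs.
Set Warnings "-all".
From HB Require Import structures.
From mathcomp Require Import all_boot all_order all_algebra.
From mathcomp Require Import all_classical all_reals all_analysis.
From mathcomp Require Import lra measurable_realfun.
Set Implicit Arguments.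
Unset Strict Implicit.
Unset Printing Implicit Defensive.
Import Order.TTheory GRing.Theory Num.Theory.
Import numFieldNormedType.Exports.
Local Open Scope classical_set_scope.
Local Open Scope ring_scope.

Section Det.
Variable R : realType.
Variable f : R -> R.
Hypothesis hf : incr_homeo_halfline f.

Let g t := inf [set s : R | 0 <= s /\ t < f s].

Lemma hf_mono s t : 0 <= s -> s < t -> f s < f t.
Proof. by case: hf => h _ _; apply: h. Qed.

Lemma hf_le s t : 0 <= s -> 0 <= t -> (f s <= f t) = (s <= t).
Proof.
move=> s0 t0; case: (ltgtP s t) => [st|ts|->]; last by rewrite lexx.
- by rewrite ltW // hf_mono.
- by apply/negbTE; rewrite -ltNge hf_mono.
Qed.

Lemma hf_lt s t : 0 <= s -> 0 <= t -> (f s < f t) = (s < t).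
Proof. by move=> s0 t0; rewrite !ltNge hf_le. Qed.

Lemma hf_ge0 s : 0 <= s -> 0 <= f s.
Proof.
case: hf => _ _ himg s0.
have : (f @` [set x | 0 <= x]) (f s) by exists s.
by rewrite himg.
Qed.

Lemma hf_surj t : 0 <= t -> exists2 s, 0 <= s & f s = t.
Proof.
case: hf => _ _ himg t0.
have : [set x : R | 0 <= x] t by [].
by rewrite -himg => -[s s0 <-]; exists s.
Qed.

Lemma g_eq t s0 : 0 <= s0 -> f s0 = t -> g t = s0.
Proof.
move=> s00 fs0; rewrite /g.
have -> : [set s : R | 0 <= s /\ t < f s] = `]s0, +oo[%classic.
  apply/seteqP; split => s /=.
  - move=> [s0' ts]; rewrite in_itv /= andbT.
    by rewrite -(hf_lt s00 s0') fs0.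
  - rewrite in_itv /= andbT => s0s.
    have s0' : 0 <= s by rewrite (le_trans s00) // ltW.
    by split => //; rewrite -fs0 hf_lt.
by rewrite inf_itv // bnd_simp.
Qed.

Lemma g_ge0 t : 0 <= t -> 0 <= g t.
Proof. by move=> t0; have [s s0 fs] := hf_surj t0; rewrite (g_eq s0 fs). Qed.

Lemma fg t : 0 <= t -> f (g t) = t.
Proof. by move=> t0; have [s s0 fs] := hf_surj t0; rewrite (g_eq s0 fs). Qed.

Lemma gf s : 0 <= s -> g (f s) = s.
Proof. by move=> s0; rewrite (g_eq s0). Qed.

Lemma g_le t u : 0 <= t -> 0 <= u -> (g t <= u) = (t <= f u).
Proof. by move=> t0 u0; rewrite -(hf_le (g_ge0 t0) u0) fg. Qed.

Lemma le_g t u : 0 <= t -> 0 <= u -> (u <= g t) = (f u <= t).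
Proof. by move=> t0 u0; rewrite -(hf_le u0 (g_ge0 t0)) fg. Qed.

Lemma g_lt t u : 0 <= t -> 0 <= u -> (g t < g u) = (t < u).
Proof. by move=> t0 u0; rewrite -(hf_lt (g_ge0 t0) (g_ge0 u0)) !fg. Qed.

Lemma f0 : f 0 = 0.
Proof.
have [s s0 fs] := hf_surj (lexx 0).
move: s0; rewrite le_eqVlt => /orP[/eqP e0|s_pos]; first by rewrite -e0 in fs.
have := hf_mono (lexx 0) s_pos; rewrite fs => h.
by have := hf_ge0 (lexx 0); rewrite leNgt h.
Qed.

Lemma g0 : g 0 = 0.
Proof. by rewrite (g_eq (lexx 0) f0). Qed.


Lemma g_right t e : 0 <= t -> 0 < e ->
  exists2 d, 0 < d & forall s, t <= s -> s < t + d -> g s < g t + e.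
Proof.
move=> t0 e0; have gt0 := g_ge0 t0.
have ge0' : 0 <= g t + e by rewrite addr_ge0 // ltW.
exists (f (g t + e) - t).
  by rewrite subr_gt0 -{1}(fg t0) hf_lt // ltrDl.
move=> s ts; rewrite addrC subrK => sf.
have s0 : 0 <= s by rewrite (le_trans t0).
by rewrite ltNge le_g // -ltNge.
Qed.

Lemma g_pos t : 0 < t -> 0 < g t.
Proof.
move=> t0; have t0' := ltW t0.
rewrite lt_neqAle g_ge0 // andbT; apply/eqP => e.
by move: (fg t0'); rewrite -e f0 => z; rewrite z ltxx in t0.
Qed.

Lemma g_left t e : 0 < t -> 0 < e ->
  exists2 d, 0 < d & d <= t /\ forall s, t - d < s -> s < t -> g t - e < g s.
Proof.
move=> t0 e0; have t0' := ltW t0; have gt0 := g_pos t0.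
pose e' := Num.min e (g t).
have e'0 : 0 < e' by rewrite lt_min e0.
have e'g : e' <= g t by rewrite ge_min lexx orbT.
have e'e : e' <= e by rewrite ge_min lexx.
have h0 : 0 <= g t - e' by rewrite subr_ge0.
exists (t - f (g t - e')).
  rewrite subr_gt0 -{2}(fg t0') hf_lt //; lra.
split; first by rewrite lerBlDr lerDl hf_ge0.
move=> s; rewrite opprB addrCA subrr addr0 => fs st.
have s0 : 0 <= s by rewrite (le_trans (hf_ge0 h0)) // ltW.
apply: (le_lt_trans (lerB (lexx _) e'e)).
by rewrite ltNge g_le // -ltNge.
Qed.

Lemma counting_comp (w : R -> nat) :
  is_counting_path w -> is_counting_path (fun t => w (g t)).
Proof.
case=> w0 wm wr wl; split.
- by rewrite g0.
- move=> s t s0 st; apply: wm; first exact: g_ge0.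
  by rewrite g_le ?g_ge0 ?(le_trans s0) // fg // (le_trans s0).
- move=> t t0; have [e e0 he] := wr _ (g_ge0 t0).
  have [d d0 hd] := g_right t0 e0.
  exists d => // s ts sd; apply: he; last exact: hd.
  have s0 : 0 <= s by exact: le_trans t0 ts.
  by rewrite g_le // ?fg // g_ge0.
- move=> t t0; have [e e0 he] := wl _ (g_pos t0).
  have [d d0 [dt hd]] := g_left t0 e0.
  exists d => // s ds st; apply: he; first exact: hd.
  have s0 : 0 <= s by rewrite (le_trans _ (ltW ds)) // subr_ge0.
  by rewrite g_lt // ltW.
Qed.

End Det.



Section Aug.
Variable R : realType.
Context {d : measure_display} {Omega : measurableType d}.
Variable F : R -> set (set Omega).
Variable E : set Omega.

Definition aug (t : R) (C : set Omega) : Prop :=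
  exists A B, [/\ F t A, F t B & C = (A `&` ~` E) `|` (B `&` E)].

Lemma augP (C A B : set Omega) :
  (forall w, ~ E w -> (C w <-> A w)) -> (forall w, E w -> (C w <-> B w)) ->
  C = (A `&` ~` E) `|` (B `&` E).
Proof.
move=> hA hB; apply/seteqP; split => w /=.
- move=> Cw; have [Ew|nEw] := pselect (E w).
  + by right; split => //; apply/hB.
  + by left; split => //; apply/hA.
- case=> [[Aw nEw]|[Bw Ew]]; [exact/(hA _ nEw)|exact/(hB _ Ew)].
Qed.

Lemma augE (C A B : set Omega) : C = (A `&` ~` E) `|` (B `&` E) ->
  (forall w, ~ E w -> (C w <-> A w)) /\ (forall w, E w -> (C w <-> B w)).
Proof.
move=> ->; split => w hw /=; split.
- by case=> [[]//|[_ ]].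
- by move=> Aw; left.
- by case=> [[_ ]|[]].
- by move=> Bw; right.
Qed.

Lemma aug_sub t C : F t C -> aug t C.
Proof. by move=> FC; exists C, C; split => //; apply: augP. Qed.

Lemma sa_bigcap (G : set (set Omega)) (X : (set Omega)^nat) :
  sigma_algebra setT G -> (forall n, G (X n)) -> G (\bigcap_n X n).
Proof.
move=> [G0 GC GU] GX.
have -> : \bigcap_n X n = setT `\` \bigcup_n (setT `\` X n).
  apply/seteqP; split => w /=.
  - by move=> h; split => // -[n _ [_]]; apply; exact: h.
  - move=> [_ h] n _; apply: contrapT => nX; apply: h; exists n => //.
by apply: (GC); apply: GU => n; apply: (GC).
Qed.

Hypothesis hF : is_filtration F.
Hypothesis mE : measurable E.

Lemma aug_filtration : is_filtration aug.
Proof.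
case: hF => Fsa Fm Fmono Frc; split.
- move=> t t0; have [G0 GC GU] := Fsa t t0; split.
  + by exists set0, set0; split => //; apply: augP.
  + move=> C [A [B [FA FB CE]]]; have [hA hB] := augE CE.
    exists (setT `\` A), (setT `\` B); split; [exact: GC|exact: GC|].
    by apply: augP => w hw /=; [have := hA w hw|have := hB w hw]; rewrite /setD /=; tauto.
  + move=> C hC.
    have hC' : forall n, exists p : set Omega * set Omega,
        [/\ F t p.1, F t p.2 & C n = (p.1 `&` ~` E) `|` (p.2 `&` E)].
      by move=> n; have [A [B h]] := hC n; exists (A, B).
    have [AB hAB] := choice hC'.
    exists (\bigcup_n (AB n).1), (\bigcup_n (AB n).2); split.
    * by apply: GU => n; have [] := hAB n.
    * by apply: GU => n; have [] := hAB n.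
    * apply: augP => w hw; split.
      - move=> [n _ Cnw]; exists n => //.
        by have [_ _ /augE[h _]] := hAB n; apply/h.
      - move=> [n _ Cnw]; exists n => //.
        by have [_ _ /augE[h _]] := hAB n; apply/h.
      - move=> [n _ Cnw]; exists n => //.
        by have [_ _ /augE[_ h]] := hAB n; apply/h.
      - move=> [n _ Cnw]; exists n => //.
        by have [_ _ /augE[_ h]] := hAB n; apply/h.
- move=> t t0 C [A [B [FA FB ->]]].
  apply: measurableU; apply: measurableI.
  + exact: Fm FA.
  + exact: measurableC.
  + exact: Fm FB.
  + exact: mE.
- move=> s t s0 st C [A [B [FA FB ->]]].
  by exists A, B; split; [exact: Fmono s t s0 st _ FA|exact: Fmono s t s0 st _ FB|].
- move=> t C t0 hC.
  have hC' : forall n : nat, exists p : set Omega * set Omega,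
      [/\ F (t + n.+1%:R^-1) p.1, F (t + n.+1%:R^-1) p.2 &
        C = (p.1 `&` ~` E) `|` (p.2 `&` E)].
    move=> n; have tn : t < t + n.+1%:R^-1 by rewrite ltrDl invr_gt0 ltr0Sn.
    by have [A [B h]] := hC _ tn; exists (A, B).
  have [AB hAB] := choice hC'.
  have liminfF (X : nat -> set Omega) : (forall n, F (t + n.+1%:R^-1) (X n)) ->
      F t (\bigcup_k \bigcap_n X (n + k)%N).
    move=> hX; apply: Frc => // s ts.
    have [K hK] := ltr_add_invr ts.
    have s0 : 0 <= s by rewrite (le_trans t0) // ltW.
    have -> : \bigcup_k \bigcap_n X (n + k)%N = \bigcup_k \bigcap_n X (n + k + K)%N.
      apply/seteqP; split => w /=.
      - move=> [k _ h]; exists k => // n _; rewrite -addnA (addnC k) addnA.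
        exact: h.
      - by move=> [k _ h]; exists (k + K)%N => // n _; rewrite addnA; exact: h.
    have [G0 GC GU] := Fsa s s0.
    apply: GU => k; apply: sa_bigcap; first exact: Fsa.
    move=> n; have h1 : 0 <= t + (n + k + K).+1%:R^-1.
      by rewrite addr_ge0 // invr_ge0 ler0n.
    suff h2 : t + (n + k + K).+1%:R^-1 <= s by exact: (Fmono _ _ h1 h2 _ (hX _)).
    apply: le_trans (ltW hK); rewrite lerD2l lef_pV2 ?posrE ?ltr0Sn // ler_nat.
    by rewrite ltnS leq_addl.
  have eqlim (X : nat -> set Omega) (w : Omega) : (forall n, C w <-> X n w) ->
      (C w <-> (\bigcup_k \bigcap_n X (n + k)%N) w).
    move=> h; split => [Cw|[k _ hk]]; first by exists 0%N => // n _; apply/h.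
    by apply/(h k); exact: (hk 0%N).
  exists (\bigcup_k \bigcap_n (AB (n + k)%N).1), (\bigcup_k \bigcap_n (AB (n + k)%N).2).
  split.
  + by apply: (liminfF (fun m => (AB m).1)) => n; have [] := hAB n.
  + by apply: (liminfF (fun m => (AB m).2)) => n; have [] := hAB n.
  + apply: augP => w hw; [apply: (eqlim (fun m => (AB m).1))|apply: (eqlim (fun m => (AB m).2))] => n.
    * by have [_ _ /augE[h _]] := hAB n; apply: h.
    * by have [_ _ /augE[_ h]] := hAB n; apply: h.
Qed.

End Aug.



Section IntT.
Variable R : realType.
Context {d : measure_display} {Omega : measurableType d}.
Variable P : probability Omega R.

Lemma int_transfer (E : set Omega) (f f' : Omega -> \bar R) (A A' : set Omega) :
  measurable E -> P E = 0%E -> P.-integrable setT f -> @measurable_fun _ _ Omega (\bar R) setT f' ->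
  (forall w, ~ E w -> f' w = f w) -> measurable A -> measurable A' ->
  (forall w, ~ E w -> (A' w <-> A w)) ->
  P.-integrable setT f' /\ (\int[P]_(w in A') f' w = \int[P]_(w in A) f w)%E.
Proof.
move=> mE PE hf mf' ff' mA mA' AA'.
have mf : measurable_fun setT f by case/integrableP: hf.
have hf' : P.-integrable setT f'.
  apply/(negligible_integrable mE measurableT mf' PE).
  apply: (eq_integrable (measurableD measurableT mE) f).
    by move=> w; rewrite inE => -[_ nE]; rewrite ff'.
  exact/(negligible_integrable mE measurableT mf PE).
split => //.
rewrite (negligible_integral mE mA' (integrableS measurableT mA' (@subsetT _ _) hf') PE).
rewrite (negligible_integral mE mA (integrableS measurableT mA (@subsetT _ _) hf) PE).
have -> : A' `\` E = A `\` E.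
  by apply/seteqP; split => w /= [h nE]; split => //; apply/(AA' w nE).
by apply: eq_integral => w; rewrite inE => -[_ nE]; rewrite ff'.
Qed.

End IntT.



Section LM.
Variable R : realType.
Context {d : measure_display} {Omega : measurableType d}.
Variable P : probability Omega R.

Definition tauE (E : set Omega) (tau : Omega -> \bar R) w :=
  if pselect (E w) then +oo%E else tau w.

Lemma tmin_ge0 (t : R) (x : \bar R) : 0 <= t -> (0 <= x)%E -> 0 <= tmin t x.
Proof.
move=> t0 x0; rewrite /tmin minEle; case: ifPn => //= h.
move: x0 h; case: x => [r||] //=; rewrite ?lee_fin // => r0 _.
Qed.

Lemma tauE_nE (E : set Omega) tau w : ~ E w -> tauE E tau w = tau w.
Proof. by rewrite /tauE => h; destruct (pselect (E w)). Qed.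

Lemma tauE_E (E : set Omega) tau w : E w -> tauE E tau w = +oo%E.
Proof. by rewrite /tauE => h; destruct (pselect (E w)). Qed.

Lemma tmin_oo (t : R) : tmin t +oo%E = t.
Proof. by rewrite /tmin minEle leey. Qed.

Lemma lm_transfer (F : R -> set (set Omega)) (E : set Omega)
    (M M' : R -> Omega -> R) (tau : nat -> Omega -> \bar R) :
  is_filtration F -> measurable E -> P E = 0%E ->
  (forall n, stopping_time F (tau n)) -> (forall n w, (0 <= tau n w)%E) ->
  (forall n w, (tau n w <= tau n.+1 w)%E) ->
  (forall w, ~ E w -> (tau n w)%E @[n --> \oo] --> +oo%E) ->
  (forall n, martingale P F (stopped M (tau n))) ->
  (forall t w, 0 <= t -> ~ E w -> M' t w = M t w) ->
  (forall t w, 0 <= t -> E w -> M' t w = - t) ->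
  local_martingale P (aug F E) M'.
Proof.
move=> hF mE PE hst h0 hmono hcv hm hM1 hM2.
have hF' := aug_filtration hF mE.
have [Fsa Fm Fmono Frc] := hF.
have [Fsa' Fm' _ _] := hF'.
exists (fun n => tauE E (tau n)); split.
- move=> n u u0; exists [set w | (tau n w <= u%:E)%E], set0; split.
  + exact: hst.
  + by have [] := Fsa u u0.
  + apply: augP => w hw /=; first by rewrite tauE_nE.
    by rewrite tauE_E // leye_eq.
- move=> n w; case: (pselect (E w)) => h; first by rewrite tauE_E.
  by rewrite tauE_nE.
- move=> n w; case: (pselect (E w)) => h; first by rewrite !tauE_E.
  by rewrite !tauE_nE.
- apply: aeW => w; case: (pselect (E w)) => h.
    have -> : (fun n => tauE E (tau n) w) = (fun _ => +oo%E).
      by apply/funext => n; rewrite tauE_E.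
    exact: cvg_cst.
  have -> : (fun n => tauE E (tau n) w) = (fun n => tau n w).
    by apply/funext => n; rewrite tauE_nE.
  exact: hcv.
- move=> n; have [adS intS eqS] := hm n.
  have hnE t w : 0 <= t -> ~ E w ->
      stopped M' (tauE E (tau n)) t w = stopped M (tau n) t w.
    move=> t0 nE; rewrite /stopped tauE_nE //.
    exact/hM1/nE/tmin_ge0.
  have hE t w : 0 <= t -> E w -> stopped M' (tauE E (tau n)) t w = - t.
    by move=> t0 Ew; rewrite /stopped tauE_E // tmin_oo hM2.
  have ad : adapted (aug F E) (stopped M' (tauE E (tau n))).
    move=> t t0 B mB.
    exists (stopped M (tau n) t @^-1` B), [set _ | B (- t)]; split.
    + exact: adS.
    + have [G0 GC _] := Fsa t t0.
      case: (pselect (B (- t))) => hB.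
        have -> : [set _ : Omega | B (- t)] = setT `\` set0.
          by apply/seteqP; split => w /=; rewrite /setD /setT /set0 /=; tauto.
        exact: GC.
      have -> : [set _ : Omega | B (- t)] = set0.
        by apply/seteqP; split => w /=; rewrite /set0 /=; tauto.
      exact: G0.
    + by apply: augP => w hw /=; [rewrite hnE|rewrite hE].
  have mS t : 0 <= t -> measurable_fun setT
      (fun w => (stopped M' (tauE E (tau n)) t w)%:E).
    move=> t0; apply/(measurable_EFinP setT (stopped M' (tauE E (tau n)) t)).
    by move=> _ Y mY; rewrite setTI; apply: (Fm' t t0); apply: ad.
  split => //.
  + move=> t t0.
    have [] := int_transfer (f := fun w => (stopped M (tau n) t w)%:E) (A := setT)
       (A' := setT) mE PE (intS t t0) (mS t t0) _ measurableT measurableT _ => //.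
    by move=> w nE; rewrite hnE.
  + move=> s t A s0 st FA.
    have t0 : 0 <= t by exact: le_trans st.
    have mA := Fm' s s0 A FA.
    have [A1 [B1 [FA1 FB1 AE]]] := FA.
    have mA1 := Fm s s0 A1 FA1.
    have [hA _] := augE AE.
    have [_ ->] := int_transfer (f := fun w => (stopped M (tau n) t w)%:E)
       mE PE (intS t t0) (mS t t0) (fun w nE => f_equal _ (hnE t w t0 nE)) mA1 mA hA.
    have [_ ->] := int_transfer (f := fun w => (stopped M (tau n) s w)%:E)
       mE PE (intS s s0) (mS s s0) (fun w nE => f_equal _ (hnE s w s0 nE)) mA1 mA hA.
    exact: eqS.
Qed.

End LM.



Lemma sigma_gen (R : realType) (T : Type) (G : set (set T)) (f : T -> R) :
  sigma_algebra setT G -> (forall x, G (f @^-1` `[x, +oo[)) ->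
  forall B, measurable B -> G (f @^-1` B).
Proof.
move=> [G0 GC GU] hG B mB.
have : (@RGenCInfty.G R).-sigma.-measurable B.
  by rewrite -RGenCInfty.measurableE.
apply: (@smallest_sub _ _ _ [set A | G (f @^-1` A)]) => /=.
- split => /=.
  + by rewrite preimage_set0.
  + move=> A hA.
    suff -> : f @^-1` (setT `\` A) = setT `\` (f @^-1` A) by exact: GC.
    by apply/seteqP; split => w /=.
  + by move=> A hA; rewrite preimage_bigcup; apply: GU.
- by move=> A [x ->].
Qed.



Lemma cp0 (R : realType) : is_counting_path (fun _ : R => 0%N).
Proof. by split => // t t0; exists 1 => //; rewrite ltr01. Qed.

Lemma g_neg (R : realType) (f : R -> R) t : incr_homeo_halfline f -> t < 0 ->
  inf [set s : R | 0 <= s /\ t < f s] = 0.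
Proof.
move=> hf t0.
have -> : [set s : R | 0 <= s /\ t < f s] = `[0, +oo[%classic.
  apply/seteqP; split => s /=; rewrite in_itv /= andbT; first by case.
  by move=> s0; split => //; rewrite (lt_le_trans t0) // hf_ge0.
by rewrite inf_itv // bnd_simp.
Qed.

Lemma sa_const (T : Type) (G : set (set T)) (p : Prop) :
  sigma_algebra setT G -> G [set _ : T | p].
Proof.
move=> [G0 GC _]; case: (pselect p) => hp.
  have -> : [set _ : T | p] = setT `\` set0.
    by apply/seteqP; split => w /=; rewrite /setD /setT /set0 /=; tauto.
  exact: GC.
have -> : [set _ : T | p] = set0.
  by apply/seteqP; split => w /=; rewrite /set0 /=; tauto.
exact: G0.
Qed.

Section Mod.
Variable R : realType.
Context {d : measure_display} {Omega : measurableType d}.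

Definition modE (E : set Omega) (X : Omega -> R -> nat) (w : Omega) : R -> nat :=
  if pselect (E w) then (fun _ => 0%N) else X w.

Lemma modE_nE E X w : ~ E w -> modE E X w = X w.
Proof. by rewrite /modE => h; destruct (pselect (E w)). Qed.

Lemma modE_E E X w : E w -> modE E X w = (fun _ => 0%N).
Proof. by rewrite /modE => h; destruct (pselect (E w)). Qed.

Lemma pp_mod (P : probability Omega R) (E : set Omega) (X : Omega -> R -> nat) :
  measurable E ->
  (forall t k, exists2 A, measurable A & forall w, ~ E w -> (X w t = k <-> A w)) ->
  (forall w, ~ E w -> is_counting_path (X w)) ->
  is_point_process P (modE E X).
Proof.
move=> mE hX hc; split.
- move=> t k; have [A mA hA] := hX t k.
  have -> : [set w | modE E X w t = k] = (A `&` ~` E) `|` ([set _ | 0%N = k] `&` E).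
    apply: (augP (E := E)) => w hw /=.
      by rewrite modE_nE //; exact: hA.
    by rewrite modE_E.
  apply: measurableU; apply: measurableI => //; first exact: measurableC.
  by case: (pselect (0%N = k)) => h;
    [have -> : [set _ : Omega | 0%N = k] = setT by apply/seteqP; split
    |have -> : [set _ : Omega | 0%N = k] = set0 by apply/seteqP; split].
- apply: aeW => w; case: (pselect (E w)) => h.
    by rewrite modE_E //; exact: cp0.
  by rewrite modE_nE //; exact: hc.
Qed.

End Mod.



Lemma ae_null (R : realType) d (Omega : measurableType d) (P : probability Omega R)
  (Q : Omega -> Prop) :
  (\forall w \ae P, Q w) -> exists E, [/\ measurable E, P E = 0%E & forall w, ~ E w -> Q w].
Proof.
case=> E [mE PE sE]; exists E; split => // w nE.
by apply: contrapT => nQ; apply: nE; apply: sE.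
Qed.

Lemma ae_null2 (R : realType) d (Omega : measurableType d) (P : probability Omega R)
  (Q1 Q2 : Omega -> Prop) :
  (\forall w \ae P, Q1 w) -> (\forall w \ae P, Q2 w) ->
  exists E, [/\ measurable E, P E = 0%E & forall w, ~ E w -> Q1 w /\ Q2 w].
Proof.
move=> h1 h2; apply: ae_null.
by apply: filterS2 h1 h2 => w.
Qed.

Lemma ae_and (R : realType) d (Omega : measurableType d) (P : probability Omega R)
  (Q1 Q2 : Omega -> Prop) :
  (\forall w \ae P, Q1 w) -> (\forall w \ae P, Q2 w) -> (\forall w \ae P, Q1 w /\ Q2 w).
Proof. by move=> h1 h2; apply: filterS2 h1 h2 => w. Qed.

Lemma dir1 (R : realType) (y ydot : (R -> nat) -> R -> R) :
  admissible_clock y ydot -> exists_weak_gH_solution y -> exists_gHm_solution y.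
Proof.
move=> [_ hy] [d0 [Om [P [F [Z [N [hF hsol]]]]]]].
case: hsol => ppZ ppN hst hlm hrel.
have hom eta : is_counting_path eta -> incr_homeo_halfline (y eta) by move=> /hy [].
case: ppZ => mZ aeZ.
case: hlm => tau [tst t0 tmono tcv tmart].
have [E [mE PE hE]] := ae_null (ae_and aeZ (ae_and hrel tcv)).
have hF' := aug_filtration hF mE.
have [Fsa Fm _ _] := hF.
have [Fsa' _ _ _] := hF'.
exists d0, Om, P, (aug F E), (modE E Z); split => //; split.
- apply: pp_mod => //.
  + by move=> t k; exists [set w | Z w t = k]; [exact: mZ|move=> w _].
  + by move=> w /hE [].
- move=> t t00 B mB; apply: (sigma_gen (Fsa' t t00)) => // x.
  exists (if x <= 0 then setT else [set w | ((y (Z w) x)%:E <= t%:E)%E]),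
    [set _ | x <= y_star y (fun _ => 0%N) t]; split.
  + case: ifP => hx.
      have -> : [set: Om] = [set _ | True] by [].
      exact: sa_const (Fsa t t00).
    by apply: hst => //; rewrite leNgt; apply/negP => /ltW; rewrite hx.
  + by apply: sa_const; apply: Fsa.
  + apply: augP => w hw /=; rewrite in_itv /= andbT.
      rewrite modE_nE //; have [c _] := hE w hw; have hf := hom _ c.
      rewrite /y_star; case: ifP => hx.
        by split => // _; rewrite (le_trans hx) // (g_ge0 hf t00).
      have hx0 : 0 <= x by rewrite leNgt; apply/negP => /ltW; rewrite hx.
      by rewrite (le_g hf t00 hx0) /= lee_fin.
    by rewrite modE_E.
- apply: (lm_transfer (M := fun t w => (N w t)%:R - t) hF mE PE tst t0 tmono _ tmart).
  + by move=> w /hE [_ [_ h]].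
  + move=> t w t00 nE; rewrite modE_nE //.
    have [c [rel _]] := hE w nE; have hf := hom _ c.
    by rewrite /y_star (rel _ (g_ge0 hf t00)) (fg hf t00).
  + by move=> t w t00 Ew; rewrite modE_E // sub0r.
Qed.

Lemma mconst d (Om : measurableType d) (p : Prop) : measurable [set _ : Om | p].
Proof.
case: (pselect p) => h.
  by have -> : [set _ : Om | p] = setT by apply/seteqP; split.
by have -> : [set _ : Om | p] = set0 by apply/seteqP; split.
Qed.

Lemma dir2 (R : realType) (y ydot : (R -> nat) -> R -> R) :
  admissible_clock y ydot -> exists_gHm_solution y -> exists_weak_gH_solution y.
Proof.
move=> [_ hy] [d0 [Om [P [F [Z [hF hsol]]]]]].
case: hsol => ppZ had hlm.
have hom eta : is_counting_path eta -> incr_homeo_halfline (y eta) by move=> /hy [].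
case: ppZ => mZ aeZ.
case: hlm => tau [tst t0 tmono tcv tmart].
have [E [mE PE hE]] := ae_null (ae_and aeZ tcv).
have hF' := aug_filtration hF mE.
have [Fsa Fm _ _] := hF.
have [Fsa' _ _ _] := hF'.
exists d0, Om, P, (aug F E), (modE E Z),
  (modE E (fun w t => Z w (y_star y (Z w) t))); split => //; split.
- apply: pp_mod => //.
  + by move=> t k; exists [set w | Z w t = k]; [exact: mZ|move=> w _].
  + by move=> w /hE [].
- apply: pp_mod => //.
  + move=> t k; case: (ltP t 0) => ht.
      exists [set _ | 0%N = k]; first exact: mconst.
      move=> w nE; have [c _] := hE w nE; have hf := hom _ c.
      rewrite /y_star (g_neg hf ht); case: c => c0 _ _ _; rewrite c0.
      by split => ->.
    exists (\bigcup_m \bigcap_n [set w | stopped (fun t w => (Z w (y_star y (Z w) t))%:R - t)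
        (tau (n + m)%N) t w = k%:R - t]).
      apply: bigcupT_measurable => m; apply: bigcapT_measurable => n.
      apply: (Fm t ht); have [ad _ _] := tmart (n + m)%N; exact: ad t ht _ (measurable_set1 _).
    move=> w nE; have [c cv] := hE w nE; have hf := hom _ c.
    have [m0 _ hm0] := cvgey_ge cv t.
    have hsn n : (m0 <= n)%N -> stopped (fun t w => (Z w (y_star y (Z w) t))%:R - t)
        (tau n) t w = (Z w (y_star y (Z w) t))%:R - t.
      by move=> hn; rewrite /stopped /tmin minEle (hm0 n hn).
    split.
    * by move=> hk; exists m0 => // n _ /=; rewrite hsn ?leq_addl // hk.
    * move=> [m _ hm]; have := hm m0 I; rewrite /= hsn ?leq_addr //.
      by move/addIr/eqP; rewrite eqr_nat => /eqP.
  + by move=> w nE; have [c _] := hE w nE; exact: (counting_comp (hom _ c) c).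
- move=> t t00 u u0.
  exists ((fun w => y_star y (Z w) u) @^-1` `[t, +oo[),
    [set _ | ((y (fun _ => 0%N) t)%:E <= u%:E)%E]; split.
  + exact: had u u0 _ (measurable_itv _).
  + by apply: sa_const; apply: Fsa.
  + apply: augP => w hw /=; last by rewrite modE_E.
    rewrite modE_nE // in_itv /= andbT; have [c _] := hE w hw; have hf := hom _ c.
    by rewrite /y_star (le_g hf u0 t00) lee_fin.
- apply: (lm_transfer (M := fun t w => (Z w (y_star y (Z w) t))%:R - t)
    hF mE PE tst t0 tmono _ tmart).
  + by move=> w /hE [].
  + by move=> t w t00 nE; rewrite modE_nE.
  + by move=> t w t00 Ew; rewrite modE_E // sub0r.
- apply: aeW => w t t00; case: (pselect (E w)) => h; first by rewrite !modE_E.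
  rewrite !modE_nE //; have [c _] := hE w h; have hf := hom _ c.
  by rewrite /y_star (gf hf t00).
Qed.

Theorem mainTheorem16 (R : realType) (y ydot : (R -> nat) -> R -> R) :
  admissible_clock y ydot ->
  (exists_weak_gH_solution y <-> exists_gHm_solution y).
Proof. by move=> h; split; [exact: dir1 h|exact: dir2 h]. Qed.
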